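(* Let $n\geq 2$ and let $G$ be the $(2n+1)$-dimensional Heisenberg group $G=\langle x_1,\dots,x_{2n+1}\mid [x_i,x_{n+i}]=x_{2n+1}\ (1\le i\le n),\ \text{all other pairs } x_j,x_k\text{ commute}\rangle$ with Mal'cev basis $(x_1,\dots,x_{2n+1})$. Then for every ordering of a basis of the module $M$ for which the Nickel representation is upper unitriangular, the image of $G$ in $UT_{2n+2}(\mathbb{Z})$ is a distorted subgroup.
   Context: Every $g\in G$ is uniquely $x_1^{a_1}\cdots x_{2n+1}^{a_{2n+1}}$, $a_i\in\mathbb{Z}$. Let $t_i:G\to\mathbb{Z}$ map $x_1^{a_1}\cdots x_{2n+1}^{a_{2n+1}}\mapsto a_i$, viewed in the dual $(\mathbb{Q}G)^*$; $G$ acts on $(\mathbb{Q}G)^*$ by $f^g(h)=f(hg^{-1})$. The $G$-submodule $M$ generated by $t_1,\dots,t_{2n+1}$ is finite-dimensional and faithful (here with $\mathbb{Q}$-basis $\{t_1,\dots,t_{2n+1},1\}$); ordering a basis so that all matrices are upper unitriangular gives the Nickel embedding $G\to UT_{2n+2}(\mathbb{Z})$, the group of upper unitriangular integer matrices. A subgroup $H$ of a finitely generated group $K$ is distorted if $\Delta_H^K(n)=\max\{dist_H(1,h): h\in H, dist_K(1,h)\le n\}$ (word metrics) is not bounded by $Cn$ for any constant $C$. *)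

(* Defs.v *)
From mathcomp Require Import all_boot all_order all_algebra all_fingroup.
Set Implicit Arguments. Unset Strict Implicit. Unset Printing Implicit Defensive.
Import GRing.Theory Num.Theory.
Local Open Scope ring_scope.

(* A group element x_1^{a_1} ... x_{2n+1}^{a_{2n+1}} is represented by its  *)
(* exponent vector g : 'I_(2n+1) -> int, 0-indexed: g k = a_{k+1}.          *)
(* Commutator convention [u,v] = u^-1 v^-1 u v, so [x_i,x_{n+i}] = x_{2n+1} *)
(* gives x_{n+i}^b x_i^a = x_i^a x_{n+i}^b x_{2n+1}^{-ab}, whence            *)
(*  (a,b,c)(a',b',c') = (a+a', b+b', c+c' - a'.b)                           *)
(*  (a,b,c)^-1        = (-a, -b, -c - a.b).                                 *)
Definition heis (n : nat) := 'I_(2 * n).+1 -> int.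

Definition hmul (n : nat) (g h : heis n) : heis n := fun k =>
  if (k < 2 * n)%N then g k + h k
  else g k + h k - \sum_(i < n) h (inord i) * g (inord (n + i)).

Definition hinv (n : nat) (g : heis n) : heis n := fun k =>
  if (k < 2 * n)%N then - g k
  else - g k - \sum_(i < n) g (inord i) * g (inord (n + i)).

Definition hgen (n : nat) (i : 'I_(2 * n).+1) : heis n :=
  fun k => if k == i then 1 else 0.

(* The module M: basis t_1, ..., t_{2n+1}, 1 of functions G -> Z (inside    *)
(* (QG)^* ), indexed by 'I_(2n+2): index k < 2n+1 is t_{k+1}, index 2n+1   *)
(* is the constant function 1.  Action f^g (h) = f (h g^-1).                *)
Definition tbasis (n : nat) (k : 'I_(2 * n).+2) : heis n -> int :=
  fun h => if (k < (2 * n).+1)%N then h (inord k) else 1.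

Definition hact (n : nat) (g : heis n) (f : heis n -> int) : heis n -> int :=
  fun h => f (hmul h (hinv g)).

(* A is the matrix of g acting on M in the ordered basis                    *)
(* (tbasis (s 0), ..., tbasis (s (2n+1))) (row convention:                   *)
(*  (b_j)^g = sum_k A j k b_k, so that g |-> A is a homomorphism).          *)
Definition nickel_mat (n : nat) (s : {perm 'I_(2 * n).+2}) (g : heis n)
  (A : 'M[int]_((2 * n).+2)) : Prop :=
  forall (j : 'I_(2 * n).+2) (h : heis n),
    hact g (tbasis (s j)) h = \sum_(k < (2 * n).+2) A j k * tbasis (s k) h.

Definition is_UT (m : nat) (A : 'M[int]_m) : Prop :=
  forall i j : 'I_m, ((j < i)%N -> A i j = 0) /\ (i = j -> A i j = 1).

Definition nickel_image (n : nat) (s : {perm 'I_(2 * n).+2})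
  (A : 'M[int]_((2 * n).+2)) : Prop :=
  exists g : heis n, nickel_mat s g A.

Definition nickel_gens (n : nat) (s : {perm 'I_(2 * n).+2})
  (A : 'M[int]_((2 * n).+2)) : Prop :=
  exists i : 'I_(2 * n).+1,
    nickel_mat s (@hgen n i) A \/ nickel_mat s (hinv (@hgen n i)) A.

Definition ut_gens (m : nat) (A : 'M[int]_m) : Prop :=
  exists i j : 'I_m, (i < j)%N /\
    (A = 1%:M + delta_mx i j \/ A = 1%:M - delta_mx i j).

Definition wlen_le (m : nat) (S : 'M[int]_m -> Prop) (k : nat)
  (A : 'M[int]_m) : Prop :=
  exists w : seq 'M[int]_m,
    (size w <= k)%N /\ (forall B, B \in w -> S B) /\ A = foldr mulmx 1%:M w.

Definition distorted (m : nat) (H SH SK : 'M[int]_m -> Prop) : Prop :=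
  ~ exists C : nat, forall (k : nat) (A : 'M[int]_m),
      H A -> wlen_le SK k A -> wlen_le SH (C * k) A.

(* Main.v *)
Require Import Defs.
From mathcomp Require Import all_boot all_order all_algebra all_fingroup.
From mathcomp Require Import ring zify.
Set Implicit Arguments. Unset Strict Implicit. Unset Printing Implicit Defensive.
Import Order.TTheory GRing.Theory Num.Theory.
Local Open Scope ring_scope.

Section H.
Variable n : nat.

Lemma lo_lt (i : 'I_n) : ((inord i : 'I_(2*n).+1) < 2*n)%N.
Proof. have hi := ltn_ord i; rewrite inordK; lia. Qed.
Lemma hi_lt (i : 'I_n) : ((inord (n+i) : 'I_(2*n).+1) < 2*n)%N.
Proof. have hi := ltn_ord i; rewrite inordK; lia. Qed.

Lemma hmul_lt (g h : heis n) (k : 'I_(2*n).+1) : (k < 2*n)%N -> hmul g h k = g k + h k.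
Proof. by move=> hk; rewrite /hmul hk. Qed.
Lemma hmul_ge (g h : heis n) (k : 'I_(2*n).+1) : ~~ (k < 2*n)%N ->
  hmul g h k = g k + h k - \sum_(i < n) h (inord i) * g (inord (n + i)).
Proof. by move=> hk; rewrite /hmul (negbTE hk). Qed.
Lemma hinv_lt (g : heis n) (k : 'I_(2*n).+1) : (k < 2*n)%N -> hinv g k = - g k.
Proof. by move=> hk; rewrite /hinv hk. Qed.
Lemma hinv_ge (g : heis n) (k : 'I_(2*n).+1) : ~~ (k < 2*n)%N ->
  hinv g k = - g k - \sum_(i < n) g (inord i) * g (inord (n + i)).
Proof. by move=> hk; rewrite /hinv (negbTE hk). Qed.

Lemma sum_hinv_lo (g : heis n) (F : 'I_n -> int) :
  \sum_(i < n) hinv g (inord i) * F i = - \sum_(i < n) g (inord i) * F i.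
Proof. rewrite -sumrN; apply: eq_bigr => i _; by rewrite hinv_lt ?lo_lt // mulNr. Qed.
Lemma sum_hinv_hi (g : heis n) (F : 'I_n -> int) :
  \sum_(i < n) F i * hinv g (inord (n + i)) = - \sum_(i < n) F i * g (inord (n + i)).
Proof. rewrite -sumrN; apply: eq_bigr => i _; by rewrite hinv_lt ?hi_lt // mulrN. Qed.
Lemma sum_hmul_lo (g h : heis n) (F : 'I_n -> int) :
  \sum_(i < n) hmul g h (inord i) * F i =
  \sum_(i < n) g (inord i) * F i + \sum_(i < n) h (inord i) * F i.
Proof. rewrite -big_split; apply: eq_bigr => i _; by rewrite hmul_lt ?lo_lt // mulrDl. Qed.
Lemma sum_hmul_hi (g h : heis n) (F : 'I_n -> int) :
  \sum_(i < n) F i * hmul g h (inord (n + i)) =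
  \sum_(i < n) F i * g (inord (n + i)) + \sum_(i < n) F i * h (inord (n + i)).
Proof. rewrite -big_split; apply: eq_bigr => i _; by rewrite hmul_lt ?hi_lt // mulrDr. Qed.

Lemma hassoc (x g h : heis n) (k : 'I_(2*n).+1) :
  hmul (hmul x (hinv h)) (hinv g) k = hmul x (hinv (hmul g h)) k.
Proof.
case: (boolP (k < 2*n)%N) => hk.
  by rewrite !(hmul_lt, hinv_lt) //; ring.
rewrite !(hmul_ge, hinv_ge) //.
rewrite !(sum_hinv_lo, sum_hinv_hi, sum_hmul_lo, sum_hmul_hi).
ring.
Qed.

Lemma nm_mul (s : {perm 'I_(2 * n).+2}) g h A B :
  nickel_mat s g A -> nickel_mat s h B -> nickel_mat s (hmul g h) (A *m B).
Proof.
move=> hA hB j x.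
have -> : hact (hmul g h) (tbasis (s j)) x = hact g (tbasis (s j)) (hmul x (hinv h)).
  by rewrite /hact /tbasis hassoc.
rewrite hA.
under eq_bigr => l _ do rewrite -/(hact h (tbasis (s l)) x) hB big_distrr.
rewrite exchange_big /=; apply: eq_bigr => k _.
by rewrite mxE big_distrl /=; apply: eq_bigr => l _; rewrite mulrA.
Qed.

Definition h0 : heis n := fun _ => 0.

Lemma nm_one (s : {perm 'I_(2 * n).+2}) : nickel_mat s h0 1%:M.
Proof.
move=> j x.
rewrite (bigD1 j) //= big1 ?addr0.
  rewrite mxE eqxx mul1r /hact /tbasis; case: ifP => // _.
  case: (boolP ((inord (s j) : 'I_(2*n).+1) < 2*n)%N) => hk.
    by rewrite hmul_lt ?hinv_lt // /h0 oppr0 addr0.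
  rewrite hmul_ge // hinv_ge // sum_hinv_lo /h0.
  rewrite !big1 ?oppr0 ?subr0 ?addr0 // => i _; exact: mul0r.
by move=> k hk; rewrite mxE eq_sym (negbTE hk) mul0r.
Qed.

Lemma rs1 (m : nat) (j : 'I_m) (f : 'I_m -> int) :
  \sum_(k < m) (1%:M : 'M[int]_m) j k * f k = f j.
Proof.
rewrite (bigD1 j) //= big1 ?addr0; first by rewrite mxE eqxx mul1r.
by move=> k hk; rewrite mxE eq_sym (negbTE hk) mul0r.
Qed.
Lemma rsD (m : nat) (j : 'I_m) (f : 'I_m -> int) (A B : 'M[int]_m) :
  \sum_(k < m) (A + B) j k * f k = \sum_(k < m) A j k * f k + \sum_(k < m) B j k * f k.
Proof. rewrite -big_split; apply: eq_bigr => k _; by rewrite mxE mulrDl. Qed.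
Lemma rsZ (m : nat) (j : 'I_m) (f : 'I_m -> int) x a b :
  \sum_(k < m) (x *: (delta_mx a b : 'M[int]_m)) j k * f k = x * ((j == a)%:R * f b).
Proof.
rewrite (bigD1 b) //= big1 ?addr0.
  by rewrite !mxE eqxx andbT mulrA.
by move=> k hk; rewrite !mxE (negbTE hk) andbF mulr0 mul0r.
Qed.
Lemma rsS (m p : nat) (j : 'I_m) (f : 'I_m -> int) (X : 'I_p -> 'M[int]_m) :
  \sum_(k < m) (\sum_(u < p) X u) j k * f k = \sum_(u < p) \sum_(k < m) X u j k * f k.
Proof.
rewrite exchange_big; apply: eq_bigr => k _; by rewrite summxE big_distrl.
Qed.

Lemma eq_inord (m : nat) (w : 'I_m.+1) u : (u <= m)%N -> (w == inord u) = (val w == u).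
Proof. by move=> hu; rewrite -(inj_eq val_inj) /= inordK. Qed.

Lemma sum_ind (p : nat) (F : 'I_p -> int) (v : nat) (hv : (v < p)%N) :
  \sum_(u < p) F u * (v == u)%:R = F (Ordinal hv).
Proof.
rewrite (bigD1 (Ordinal hv)) //= big1 ?addr0; first by rewrite eqxx mulr1.
move=> u hu; case: eqP => [e|]; last by rewrite mulr0.
by move: hu; rewrite -(inj_eq val_inj) /= e eqxx.
Qed.
Lemma sum_ind0 (p : nat) (F : 'I_p -> int) (v : nat) : ~~ (v < p)%N ->
  \sum_(u < p) F u * (v == u)%:R = 0.
Proof.
move=> hv; rewrite big1 // => u _; case: eqP => [e|]; last by rewrite mulr0.
by move: hv; rewrite e ltn_ord.
Qed.

Variable s : {perm 'I_(2 * n).+2}.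
Definition pos (u : nat) : 'I_(2*n).+2 := (s^-1)%g (inord u).

Lemma eq_pos j u : (u <= (2*n).+1)%N -> (j == pos u) = (nat_of_ord (s j) == u).
Proof.
move=> hu; rewrite -eq_inord //.
apply/eqP/eqP => [->|e]; first by rewrite /pos permKV.
by rewrite /pos -e permK.
Qed.

Lemma tb_pos u h : tbasis (s (pos u)) h = tbasis (inord u) h.
Proof. by rewrite /pos permKV. Qed.
Lemma tb_lo u (h : heis n) : (u <= 2*n)%N -> tbasis (inord u) h = h (inord u).
Proof. move=> hu; rewrite /tbasis inordK; [rewrite ifT //; lia | lia]. Qed.
Lemma tb_hi (h : heis n) : tbasis (inord (2*n).+1) h = 1.
Proof. by rewrite /tbasis inordK // ltnn. Qed.

Lemma u_le (u : 'I_(2*n)) : (u <= (2*n).+1)%N.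
Proof. by have := ltn_ord u; lia. Qed.
Lemma hi_le (i : 'I_n) : (n + i <= 2*n)%N.
Proof. by have := ltn_ord i; lia. Qed.
Lemma tbE (w : 'I_(2*n).+2) (x : heis n) : (w < (2*n).+1)%N -> tbasis w x = x (inord w).
Proof. by move=> hw; rewrite /tbasis hw. Qed.

Definition Mg (g : heis n) : 'M[int]_((2*n).+2) :=
  1%:M + \sum_(u < 2*n) (- g (inord u)) *: delta_mx (pos u) (pos (2*n).+1)
  + (- (g (inord (2*n)) + \sum_(i < n) g (inord i) * g (inord (n+i))))
      *: delta_mx (pos (2*n)) (pos (2*n).+1)
  + \sum_(i < n) g (inord i) *: delta_mx (pos (2*n)) (pos (n+i)).

Lemma nm_Mg g : nickel_mat s g (Mg g).
Proof.
move=> j h; rewrite /Mg !rsD rs1 !rsS.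
under eq_bigr => u _ do rewrite rsZ tb_pos tb_hi mulr1.
under [X in _ = _ + _ + X]eq_bigr => i _ do rewrite rsZ tb_pos.
rewrite rsZ tb_pos tb_hi mulr1.
rewrite /hact.
have hw := ltn_ord (s j).
case: (ltngtP (nat_of_ord (s j)) (2*n)) => hv.
- under eq_bigr => u _ do rewrite (eq_pos j (u_le u)).
  rewrite sum_ind eq_pos // (ltn_eqF hv) mulr0 addr0 big1; last first.
    by move=> i _; rewrite mul0r mulr0.
  rewrite !tbE; try lia.
  by rewrite hmul_lt ?hinv_lt ?inordK ?addr0 //=; lia.
- have hv' : nat_of_ord (s j) = (2*n).+1 by lia.
  have e1 : (j == pos (2*n)) = false by rewrite eq_pos // hv'; apply/eqP; lia.
  under eq_bigr => u _ do rewrite (eq_pos j (u_le u)) hv'.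
  rewrite sum_ind0 ?ltnNge ?leqnSn // e1 mulr0 addr0 big1 ?addr0; last first.
    by move=> i _; rewrite mul0r mulr0.
  by rewrite /tbasis hv' ltnn.
- under eq_bigr => u _ do rewrite (eq_pos j (u_le u)) hv.
  rewrite sum_ind0 ?ltnn // addr0.
  rewrite eq_pos // hv eqxx mulr1.
  under eq_bigr => i _ do rewrite mul1r (tb_lo _ (hi_le i)).
  rewrite !tbE ?hv //.
  have hc : ~~ ((inord (2*n) : 'I_(2*n).+1) < 2*n)%N by rewrite inordK // ltnn.
  by rewrite hmul_ge // hinv_ge // sum_hinv_lo; ring.
Qed.

Definition zN (N : int) : heis n := fun k => if (k < 2*n)%N then 0 else N.

Lemma ut_sum g A j h : is_UT A -> nickel_mat s g A ->
  hact g (tbasis (s j)) h = \sum_(k < (2*n).+2 | (j <= k)%N) A j k * tbasis (s k) h.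
Proof.
move=> hU hA; rewrite hA [RHS]big_mkcond; apply: eq_bigr => k _ /=.
by case: leqP => // hkj; rewrite (proj1 (hU j k) hkj) mul0r.
Qed.

Lemma pos_inj u v : (u <= (2*n).+1)%N -> (v <= (2*n).+1)%N -> pos u = pos v -> u = v.
Proof.
move=> hu hv e; have := congr1 (fun k => nat_of_ord (s k)) e.
by rewrite /pos !permKV !inordK.
Qed.

Lemma tb_h0 (k : 'I_(2*n).+2) : k != pos (2*n).+1 -> tbasis (s k) h0 = 0.
Proof.
rewrite eq_pos // => hk; rewrite tbE //.
have := ltn_ord (s k); move: hk; case: eqP => //; lia.
Qed.

Hypothesis hUT : forall g A, nickel_mat s g A -> is_UT A.

Lemma ut_zero g (j : 'I_(2*n).+2) h : (forall k : 'I_(2*n).+2, (j <= k)%N -> tbasis (s k) h = 0) ->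
  hact g (tbasis (s j)) h = 0.
Proof.
move=> hk; rewrite (ut_sum j h (hUT (nm_Mg g)) (nm_Mg g)) big1 // => k hjk.
by rewrite hk ?mulr0.
Qed.

Lemma ut_same g (j : 'I_(2*n).+2) h h' : (forall k : 'I_(2*n).+2, (j <= k)%N -> tbasis (s k) h = tbasis (s k) h') ->
  hact g (tbasis (s j)) h = hact g (tbasis (s j)) h'.
Proof.
move=> hk; rewrite (ut_sum j h (hUT (nm_Mg g)) (nm_Mg g)) (ut_sum j h' (hUT (nm_Mg g)) (nm_Mg g)).
by apply: eq_bigr => k hjk; rewrite hk.
Qed.

Lemma cI_ge : ~~ ((inord (2*n) : 'I_(2*n).+1) < 2*n)%N.
Proof. by rewrite inordK // ltnn. Qed.

Lemma zN_lo N (k : 'I_(2*n).+1) : (k < 2*n)%N -> zN N k = 0.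
Proof. by move=> hk; rewrite /zN hk. Qed.
Lemma zN_c N : zN N (inord (2*n)) = N.
Proof. by rewrite /zN (negbTE cI_ge). Qed.

Lemma hact_c g h : hact g (tbasis (s (pos (2*n)))) h = hmul h (hinv g) (inord (2*n)).
Proof. by rewrite /hact tb_pos tb_lo. Qed.

Lemma F1 : (pos (2*n) < pos (2*n).+1)%N.
Proof.
rewrite ltnNge; apply/negP => hle.
have : hact (zN 1) (tbasis (s (pos (2*n)))) h0 = -1.
  rewrite hact_c hmul_ge ?cI_ge // hinv_ge ?cI_ge // sum_hinv_lo zN_c.
  rewrite !big1 ?oppr0 ?subr0 /h0 ?add0r //.
    by move=> i _; rewrite mulr0.
  by move=> i _; rewrite zN_lo ?lo_lt // mul0r.
rewrite ut_zero // => k hk; apply: tb_h0; apply/eqP => e.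
have e2 : pos (2*n) = pos (2*n).+1.
  by apply/val_inj/eqP; rewrite eqn_leq hle -e hk.
by have := pos_inj (leqnSn _) (leqnn _) e2; lia.
Qed.

Lemma inord_eq2 a b : (a <= 2*n)%N -> (b <= 2*n)%N ->
  ((inord a : 'I_(2*n).+1) == inord b) = (a == b).
Proof. by move=> ha hb; rewrite -(inj_eq val_inj) /= !inordK. Qed.

Lemma hgen_sum (i : 'I_n) :
  \sum_(k < n) @hgen n (inord i) (inord k) * @hgen n (inord (n+i)) (inord (n+k)) = 1 :> int.
Proof.
have hi := ltn_ord i.
rewrite (bigD1 i) //= big1 ?addr0.
  by rewrite /hgen !eqxx mulr1.
move=> k hk; have hk' := ltn_ord k.
rewrite /hgen inord_eq2; try lia.
by case: eqP => [/val_inj e|]; [rewrite e eqxx in hk | rewrite mul0r].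
Qed.

Lemma F2 u : (n <= u < 2*n)%N -> (pos u < pos (2*n).+1)%N.
Proof.
move=> hu; rewrite ltnNge; apply/negP => hle.
have : hact (hgen (inord u)) (tbasis (s (pos u))) h0 = -1.
  rewrite /hact tb_pos tb_lo; last by lia.
  by rewrite hmul_lt ?hinv_lt ?inordK /hgen ?eqxx ?add0r //; lia.
rewrite ut_zero // => k hk; apply: tb_h0; apply/eqP => e.
have e2 : pos u = pos (2*n).+1.
  by apply/val_inj/eqP; rewrite eqn_leq hle -e hk.
by have := pos_inj _ (leqnn _) e2; lia.
Qed.

Lemma F3 (i : 'I_n) : (pos (2*n) < pos (n + i))%N.
Proof.
have hi := ltn_ord i.
rewrite ltnNge; apply/negP => hle.
have := @ut_same (hgen (inord i)) (pos (2*n)) (hgen (inord (n+i))) h0.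
rewrite !hact_c !hmul_ge ?cI_ge // !sum_hinv_lo hgen_sum.
rewrite big1 /h0; last by move=> k _; rewrite mulr0.
have -> : @hgen n (inord (n + i)) (inord (2 * n)) = 0 :> int.
  rewrite /hgen /= ifN //; apply/negP => /eqP /(congr1 val) /=; rewrite !inordK; lia.
have hne : forall k : 'I_(2*n).+2, k != pos (n + i) -> k != pos (2*n).+1 ->
    tbasis (s k) (hgen (inord (n + i))) = tbasis (s k) h0.
  move=> k hk1 hk2; rewrite tb_h0 //.
  have hsk : (s k < (2*n).+1)%N.
    by have := ltn_ord (s k); move: hk2; rewrite eq_pos //; case: eqP => //; lia.
  rewrite tbE // /hgen /= ifN //; apply/negP => /eqP /(congr1 val) /=.
  rewrite !inordK; try lia.
  by move=> e; move: hk1; rewrite eq_pos ?e ?eqxx //; lia.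
move=> H; have := H _.
rewrite !add0r opprK oppr0 subr0.
suff hh : forall k : 'I_(2 * n).+2, (pos (2 * n) <= k)%N ->
    tbasis (s k) (hgen (inord (n + i))) = tbasis (s k) h0.
  by move=> /(_ hh); lia.
move=> k hk.
case: (eqVneq k (pos (2*n).+1)) => [->|hk1]; first by rewrite !tb_pos !tb_hi.
apply: hne => //; apply/eqP => e2.
have e3 : pos (2*n) = pos (n+i) by apply/val_inj/eqP; rewrite eqn_leq hle -e2 hk.
by have := pos_inj _ _ e3; lia.
Qed.
Lemma sum_bnd (F : 'I_n -> int) (b : int) : (forall i, `|F i| <= b) ->
  `|\sum_(i < n) F i| <= n%:Z * b.
Proof.
move=> hb; apply: le_trans (ler_norm_sum _ _ _) _.
apply: le_trans (ler_sum _ (fun i _ => hb i)) _.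
rewrite sumr_const card_ord -mulr_natl; nia.
Qed.

Lemma hgen_bnd (i k : 'I_(2*n).+1) : `|@hgen n i k| <= 1.
Proof. by rewrite /hgen; case: ifP. Qed.

Lemma gen_bound B : nickel_gens s B -> exists e, nickel_mat s e B /\
  (forall k : 'I_(2*n).+1, (k < 2*n)%N -> `|e k| <= 1) /\ `|e (inord (2*n))| <= (n.+1)%:Z.
Proof.
case => i [h|h].
  exists (hgen i); split => //; split => [k _|]; first exact: hgen_bnd.
  by have := hgen_bnd i (inord (2*n)); lia.
exists (hinv (hgen i)); split => //; split => [k hk|].
  by rewrite hinv_lt // normrN hgen_bnd.
rewrite hinv_ge ?cI_ge //.
have h1 := hgen_bnd i (inord (2*n)).
have h2 : `|\sum_(i0 < n) hgen i (inord i0) * hgen i (inord (n + i0))| <= n%:Z * 1.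
  apply: sum_bnd => j; rewrite normrM.
  by have := hgen_bnd i (inord j); have := hgen_bnd i (inord (n+j)); nia.
lia.
Qed.

Lemma word_bound (w : seq 'M[int]_((2*n).+2)) : (forall B, B \in w -> nickel_gens s B) ->
  exists q, nickel_mat s q (foldr mulmx 1%:M w) /\
  (forall k : 'I_(2*n).+1, (k < 2*n)%N -> `|q k| <= (size w)%:Z) /\
  `|q (inord (2*n))| <= (n.+1)%:Z * (size w)%:Z * (size w)%:Z.
Proof.
elim: w => [|B w IH] hw.
  exists h0; split; first exact: nm_one.
  by split => [k _|]; rewrite /h0 normr0 ?mulr0.
have [q [hq [hq1 hq2]]] := IH (fun C hC => hw C (mem_behead (s:=B :: w) hC)).
have [e [he [he1 he2]]] := gen_bound (hw B (mem_head _ _)).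
exists (hmul e q); split; first exact: nm_mul.
split => [k hk|].
  by rewrite hmul_lt //= ; have := he1 k hk; have := hq1 k hk; lia.
rewrite hmul_ge ?cI_ge //=.
have h3 : `|\sum_(i < n) q (inord i) * e (inord (n + i))| <= n%:Z * (size w)%:Z.
  apply: sum_bnd => j; rewrite normrM.
  by have := hq1 _ (lo_lt j); have := he1 _ (hi_lt j); nia.
have P : (n.+1%:Z) * (size w)%:Z * (size w)%:Z + n.+1%:Z + n%:Z * (size w)%:Z
   <= n.+1%:Z * (size w).+1%:Z * (size w).+1%:Z by nia.
move: P he2 hq2 h3; rewrite /=.
move: (e (inord (2*n))) (q (inord (2*n))) (\sum_(i < n) q (inord i) * e (inord (n + i))) => x y z.
lia.
Qed.

Lemma hmul0_c (x : heis n) : hmul h0 x (inord (2*n)) = x (inord (2*n)).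
Proof.
rewrite hmul_ge ?cI_ge // /h0 big1 ?subr0 ?add0r // => i _; exact: mulr0.
Qed.

Lemma same_c g q A : nickel_mat s g A -> nickel_mat s q A ->
  hinv g (inord (2*n)) = hinv q (inord (2*n)).
Proof.
move=> hA hq; have E := etrans (hA (pos (2*n)) h0) (esym (hq (pos (2*n)) h0)).
by rewrite !hact_c !hmul0_c in E.
Qed.

Lemma hinv_zN N : hinv (zN N) (inord (2*n)) = - N.
Proof.
rewrite hinv_ge ?cI_ge // zN_c big1 ?subr0 // => i _.
by rewrite zN_lo ?lo_lt // mul0r.
Qed.

Lemma Mg_zN N : Mg (zN N) = 1%:M + (- N) *: delta_mx (pos (2*n)) (pos (2*n).+1).
Proof.
rewrite /Mg zN_c !big1 ?addr0 //.
- by move=> i _; rewrite zN_lo ?lo_lt // scale0r.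
- by move=> i _; rewrite zN_lo ?lo_lt // mul0r.
- by move=> u _; rewrite zN_lo ?oppr0 ?scale0r // inordK //; have := ltn_ord u; lia.
Qed.
End H.

Lemma comm4 (R : ringType) (P Q : R) : P * P = 0 -> Q * Q = 0 -> Q * P = 0 -> P * Q * P = 0 ->
  (1 + P) * (1 + Q) * (1 - P) * (1 - Q) = 1 + P * Q.
Proof.
move=> hPP hQQ hQP hPQP.
have e1 : (1 + P) * (1 + Q) = 1 + P + Q + P * Q.
  by rewrite mulrDl !mulrDr !mul1r mulr1 !addrA (addrAC 1 Q P).
have e2 : (1 + P + Q + P * Q) * (1 - P) = 1 + Q + P * Q.
  rewrite mulrDr mulr1 mulrN !mulrDl mul1r hPP hQP hPQP !addr0.
  by rewrite (addrAC _ (P * Q)) (addrAC _ Q) addrK.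
have e3 : (1 + Q + P * Q) * (1 - Q) = 1 + P * Q.
  rewrite mulrDr mulr1 mulrN !mulrDl mul1r hQQ -mulrA hQQ mulr0 !addr0.
  by rewrite (addrAC 1 Q) addrK.
by rewrite e1 e2 e3.
Qed.

Section U.
Variable p : nat.
Local Notation M := 'M[int]_p.+1.

Lemma foldr_mul (w : seq M) (X : M) : foldr mulmx X w = foldr mulmx 1%:M w *m X.
Proof. by elim: w => [|B w IH] /=; [rewrite mul1mx | rewrite IH mulmxA]. Qed.

Lemma wl_cat S k1 k2 (A B : M) : wlen_le S k1 A -> wlen_le S k2 B -> wlen_le S (k1 + k2) (A *m B).
Proof.
move=> [w1 [h1 [g1 ->]]] [w2 [h2 [g2 ->]]].
exists (w1 ++ w2); split; first by rewrite size_cat leq_add.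
split; first by move=> C; rewrite mem_cat => /orP [] ?; [apply: g1 | apply: g2].
by rewrite foldr_cat; symmetry; apply: foldr_mul.
Qed.

Lemma wl_mono S k1 k2 (A : M) : (k1 <= k2)%N -> wlen_le S k1 A -> wlen_le S k2 A.
Proof. by move=> hk [w [h1 h2]]; exists w; split => //; apply: leq_trans hk. Qed.

Definition E (a b : 'I_p.+1) : M := delta_mx a b.

Lemma el_mul (a b : 'I_p.+1) (x y : int) : a != b ->
  (1%:M + x *: E a b) *m (1%:M + y *: E a b) = 1%:M + (x + y) *: E a b.
Proof.
move=> hab; rewrite mulmxDl !mulmxDr !mul1mx mulmx1 -scalemxAl -scalemxAr.
rewrite /E mul_delta_mx_0 1?eq_sym // !scaler0 addr0 scalerDl addrA.
by rewrite addrAC.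
Qed.

Lemma el_word_nat (a b : 'I_p.+1) (k : nat) : (a < b)%N ->
  wlen_le (@ut_gens _) k (1%:M + (k%:Z) *: E a b) /\
  wlen_le (@ut_gens _) k (1%:M + (- k%:Z) *: E a b).
Proof.
move=> hab; have hne : a != b by rewrite neq_ltn hab.
elim: k => [|k [IH1 IH2]].
  by split; exists [::]; rewrite /= scale0r ?oppr0 ?scale0r addr0.
split.
  have -> : 1%:M + (k.+1%:Z) *: E a b = (1%:M + 1 *: E a b) *m (1%:M + (k%:Z) *: E a b).
    by rewrite el_mul //; congr (_ + _ *: _); lia.
  apply: (wl_cat (k1:=1) _ IH1).
  exists [:: 1%:M + 1 *: E a b]; split => //; split; last by rewrite /= mulmx1.
  by move=> C; rewrite inE => /eqP ->; exists a, b; split => //; left; rewrite scale1r.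
have -> : 1%:M + (- k.+1%:Z) *: E a b = (1%:M + (-1) *: E a b) *m (1%:M + (- k%:Z) *: E a b).
  by rewrite el_mul //; congr (_ + _ *: _); lia.
apply: (wl_cat (k1:=1) _ IH2).
exists [:: 1%:M + (-1) *: E a b]; split => //; split; last by rewrite /= mulmx1.
by move=> C; rewrite inE => /eqP ->; exists a, b; split => //; right; rewrite scaleN1r.
Qed.

Lemma el_word (a b : 'I_p.+1) (x : int) : (a < b)%N ->
  wlen_le (@ut_gens _) `|x|%N (1%:M + x *: E a b).
Proof.
move=> hab; case: x => k; first by case: (el_word_nat k hab).
by rewrite NegzE; case: (el_word_nat k.+1 hab).
Qed.

Lemma comm_id (a b c : 'I_p.+1) (x y : int) : (a < b)%N -> (b < c)%N ->
  1%:M + (x * y) *: E a c =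
   (1%:M + x *: E a b) *m (1%:M + y *: E b c) *m (1%:M + (- x) *: E a b) *m (1%:M + (- y) *: E b c).
Proof.
move=> hab hbc.
have hac : (a < c)%N by apply: ltn_trans hbc.
have nab : a != b by rewrite neq_ltn hab.
have nbc : b != c by rewrite neq_ltn hbc.
have nca : c != a by rewrite neq_ltn hac orbT.
  rewrite !scaleNr !mulmxE idmxE comm4.
  - by rewrite -mulmxE -scalemxAl -scalemxAr /E mul_delta_mx scalerA.
  - by rewrite -mulmxE -scalemxAl -scalemxAr /E mul_delta_mx_0 1?eq_sym // !scaler0.
  - by rewrite -mulmxE -scalemxAl -scalemxAr /E mul_delta_mx_0 1?eq_sym // !scaler0.
  - by rewrite -mulmxE -scalemxAl -scalemxAr /E mul_delta_mx_0 // !scaler0.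
  - by rewrite -!mulmxE -mulmxA -!scalemxAr -!scalemxAl /E mul_delta_mx_0 // !(scaler0, mulmx0).
Qed.

Lemma wl_comm (a b c : 'I_p.+1) (x y : int) k1 k2 k3 k4 : (a < b)%N -> (b < c)%N ->
  wlen_le (@ut_gens _) k1 (1%:M + x *: E a b) ->
  wlen_le (@ut_gens _) k2 (1%:M + y *: E b c) ->
  wlen_le (@ut_gens _) k3 (1%:M + (- x) *: E a b) ->
  wlen_le (@ut_gens _) k4 (1%:M + (- y) *: E b c) ->
  wlen_le (@ut_gens _) (k1 + k2 + k3 + k4) (1%:M + (x * y) *: E a c).
Proof.
move=> hab hbc h1 h2 h3 h4; rewrite (comm_id x y hab hbc).
by apply: wl_cat; [apply: wl_cat; [apply: wl_cat|]|].
Qed.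
End U.

Local Close Scope ring_scope.

Theorem theorem4p6 (n : nat) (hn : (2 <= n)%N) (s : {perm 'I_(2 * n).+2}) :
  (forall (g : heis n) (A : 'M[int]_((2 * n).+2)), nickel_mat s g A -> is_UT A) ->
  distorted (nickel_image s) (nickel_gens s) (@ut_gens _).
Proof.
Local Open Scope ring_scope.
move=> hUT [C HC].
have n0 : (0 < n)%N by lia.
have n1 : (1 < n)%N by lia.
have ha0 := F3 hUT (Ordinal n0).
have ha1 := F3 hUT (Ordinal n1).
have hd0 := @F2 n s hUT (n + 0)%N ltac:(lia).
have hd1 := @F2 n s hUT (n + 1)%N ltac:(lia).
have hne : pos s (n + 0)%N <> pos s (n + 1)%N by move/pos_inj; lia.
pose m := (100 * (2*n+1) * C * C).+1.
pose N := (m * m * m)%:Z.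
have Hw : wlen_le (@ut_gens _) (10 * m) (Mg s (zN N)).
  rewrite Mg_zN.
  have key : forall b c : 'I_(2*n).+2, (pos s (2*n) < b)%N -> (b < c)%N ->
      (c < pos s (2*n).+1)%N ->
      wlen_le (@ut_gens _) (10 * m) (1%:M + (- N) *: delta_mx (pos s (2*n)) (pos s (2*n).+1)).
    move=> b c hab hbc hcd.
    have hac : (pos s (2*n) < c)%N by apply: ltn_trans hbc.
    have e1 := wl_comm hab hbc (el_word (m%:Z) hab) (el_word (m%:Z) hbc)
                (el_word (- m%:Z) hab) (el_word (- m%:Z) hbc).
    have e2 := wl_comm hab hbc (el_word (- m%:Z) hab) (el_word (m%:Z) hbc)
                (el_word (- - m%:Z) hab) (el_word (- m%:Z) hbc).
    rewrite mulNr in e2.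
    have e3 := wl_comm hac hcd e1 (el_word (- m%:Z) hcd) e2 (el_word (- - m%:Z) hcd).
    have -> : - N = m%:Z * m%:Z * - m%:Z by rewrite /N; lia.
    apply: wl_mono e3; rewrite !abszN; lia.
  case: (ltngtP (pos s (n + 0)%N) (pos s (n + 1)%N)) => hbb.
  - by apply: (key _ _ ha0 hbb hd1).
  - by apply: (key _ _ ha1 hbb hd0).
  - by move/val_inj: hbb.
have [w [hsz [hg hA]]] := HC (10 * m) _ (ex_intro _ (zN N) (nm_Mg s (zN N))) Hw.
have [q [hq [hq1 hq2]]] := word_bound hg.
rewrite -hA in hq.
have := same_c (nm_Mg s (zN N)) hq.
rewrite hinv_zN hinv_ge ?cI_ge //.
have h3 : `|\sum_(i < n) q (inord i) * q (inord (n + i))| <= n%:Z * ((size w)%:Z * (size w)%:Z).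
  apply: sum_bnd => j; rewrite normrM.
  by have := hq1 _ (lo_lt j); have := hq1 _ (hi_lt j); nia.
move: h3 hq2 hsz; rewrite /N.
move: (q (inord (2*n))) (\sum_(i < n) q (inord i) * q (inord (n + i))) => y z.
move: (size w) => L.
move=> h3 h2 hL e.
have hN : (m * m * m <= (2 * n + 1) * (L * L))%N.
  have : ((m * m * m)%:Z <= (2 * n + 1)%:Z * (L%:Z * L%:Z)) by nia.
  lia.
have hL2 : (L * L <= (C * (10 * m)) * (C * (10 * m)))%N by apply: leq_mul.
have : (m * m * m <= (2 * n + 1) * ((C * (10 * m)) * (C * (10 * m))))%N.
  apply: leq_trans hN _; exact: leq_mul.
rewrite /m; nia.
Qed.
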